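(* Let $\mathcal{R}=(\mathcal{F},R)$ be a 3-DCTRS. If $\mathcal{R}$ is terminating, the transformation $\mathcal{U}$ preserves $\to_{\mathcal{R}}$-irreducibility of $\mathcal{R}$, and the TRS $\mathcal{U}(\mathcal{R})$ is confluent, then $\mathcal{R}$ is confluent.
   Context: An oriented CTRS $\mathcal{R}=(\mathcal{F},R)$ has rules $\ell\to r\Leftarrow s_1\approx t_1,\dots,s_n\approx t_n$ ($\ell$ not a variable, $n\ge 0$) where conditions are reachability tests: $s\to_{\mathcal{R}}t$ iff there are a rule, a position $p$ of $s$ and a substitution $\sigma$ with $s|_p=\sigma(\ell)$, $\sigma(s_j)\to^*_{\mathcal{R}}\sigma(t_j)$ for all $j$, and $t=s[\sigma(r)]_p$ (least such relation). It is deterministic (a DCTRS) if for each rule and each $1\le i\le n$, $\mathrm{Var}(s_i)\subseteq\mathrm{Var}(\ell)\cup\bigcup_{j=1}^{i-1}\mathrm{Var}(t_j)$; it is a 3-CTRS if for each rule $\mathrm{Var}(r)\subseteq\mathrm{Var}(\ell)\cup\bigcup_j(\mathrm{Var}(s_j)\cup\mathrm{Var}(t_j))$. $\mathcal{R}$ is terminating if there is no infinite $\to_{\mathcal{R}}$-sequence, and confluent if any two $\to^*_{\mathcal{R}}$-reducts of a common term have a common $\to^*_{\mathcal{R}}$-reduct. Transformation $\mathcal{U}$: each conditional rule $\alpha:\ell\to r\Leftarrow s_1\approx t_1,\dots,s_n\approx t_n$ ($n\ge1$) is replaced by the unconditional rules $\ell\to U^\alpha_1(s_1,\vec x_1)$,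 $U^\alpha_{i-1}(t_{i-1},\vec x_{i-1})\to U^\alpha_i(s_i,\vec x_i)$ for $2\le i\le n$, and $U^\alpha_n(t_n,\vec x_n)\to r$, where the $U^\alpha_i$ are fresh function symbols and $\vec x_i$ is a sequence of the variables in $\mathrm{Var}(\ell)\cup\mathrm{Var}(t_1)\cup\dots\cup\mathrm{Var}(t_{i-1})$; unconditional rules are kept. $\mathcal{U}(\mathcal{R})=(\mathcal{U}(\mathcal{F}),\mathcal{U}(R))$ is the resulting TRS over $\mathcal{F}$ extended with the new symbols. $\mathcal{U}$ preserves $\to_{\mathcal{R}}$-irreducibility if every term $t$ over $\mathcal{F}$ and variables that is $\to_{\mathcal{R}}$-irreducible is also $\to_{\mathcal{U}(\mathcal{R})}$-irreducible. *)

(* Defs.v *)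
From Stdlib Require Import List Arith PeanoNat.
Import ListNotations.
Set Implicit Arguments.

Inductive term (Sg : Type) : Type :=
| Var : nat -> term Sg
| Fun : Sg -> list (term Sg) -> term Sg.
Arguments Var {Sg} _.
Arguments Fun {Sg} _ _.

Inductive wf (Sg : Type) (ok : Sg -> nat -> Prop) : term Sg -> Prop :=
| wf_var : forall x, wf ok (Var x)
| wf_fun : forall f ts, ok f (length ts) -> (forall t, In t ts -> wf ok t) -> wf ok (Fun f ts).

Fixpoint vars (Sg : Type) (t : term Sg) : list nat :=
  match t with
  | Var x => [x]
  | Fun _ ts => (fix go (l : list (term Sg)) : list nat :=
                   match l with [] => [] | u :: l' => vars u ++ go l' end) ts
  end.

Fixpoint subst (Sg : Type) (sigma : nat -> term Sg) (t : term Sg) : term Sg :=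
  match t with
  | Var x => sigma x
  | Fun f ts => Fun f (map (subst sigma) ts)
  end.

Fixpoint map_term (Sg S' : Type) (h : Sg -> S') (t : term Sg) : term S' :=
  match t with
  | Var x => Var x
  | Fun f ts => Fun (h f) (map (map_term h) ts)
  end.

Record crule (Sg : Type) : Type := mkRule {
  lhs : term Sg; rhs : term Sg; conds : list (term Sg * term Sg) }.
Arguments mkRule {Sg} _ _ _.

Inductive rtc (A : Type) (r : A -> A -> Prop) : A -> A -> Prop :=
| rtc_refl : forall x, rtc r x x
| rtc_step : forall x y z, r x y -> rtc r y z -> rtc r x z.

Inductive step (Sg : Type) (ok : Sg -> nat -> Prop) (R : crule Sg -> Prop)
  : term Sg -> term Sg -> Prop :=
| step_root : forall rho sigma,
    R rho -> (forall x, wf ok (sigma x)) ->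
    (forall c, In c (conds rho) -> rtc (step ok R) (subst sigma (fst c)) (subst sigma (snd c))) ->
    step ok R (subst sigma (lhs rho)) (subst sigma (rhs rho))
| step_ctx : forall f l1 s t l2,
    step ok R s t -> step ok R (Fun f (l1 ++ s :: l2)) (Fun f (l1 ++ t :: l2)).

Definition terminating (Sg : Type) (ok : Sg -> nat -> Prop) (R : crule Sg -> Prop) : Prop :=
  ~ exists g : nat -> term Sg, wf ok (g 0) /\ forall n, step ok R (g n) (g (S n)).

Definition confluent (Sg : Type) (ok : Sg -> nat -> Prop) (R : crule Sg -> Prop) : Prop :=
  forall s t u, wf ok s -> rtc (step ok R) s t -> rtc (step ok R) s u ->
  exists v, rtc (step ok R) t v /\ rtc (step ok R) u v.

Definition ok_of (F : Type) (arity : F -> nat) : F -> nat -> Prop := fun f n => arity f = n.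

Definition is_CTRS (F : Type) (arity : F -> nat) (R : crule F -> Prop) : Prop :=
  forall rho, R rho ->
    (exists f ts, lhs rho = Fun f ts) /\
    wf (ok_of arity) (lhs rho) /\ wf (ok_of arity) (rhs rho) /\
    (forall c, In c (conds rho) -> wf (ok_of arity) (fst c) /\ wf (ok_of arity) (snd c)).

Definition vars_ts (Sg : Type) (cs : list (term Sg * term Sg)) : list nat :=
  flat_map (fun c => vars (snd c)) cs.

Definition deterministic (Sg : Type) (R : crule Sg -> Prop) : Prop :=
  forall rho, R rho -> forall i, i < length (conds rho) ->
    incl (vars (fst (nth i (conds rho) (Var 0, Var 0))))
         (vars (lhs rho) ++ vars_ts (firstn i (conds rho))).

Definition type3 (Sg : Type) (R : crule Sg -> Prop) : Prop :=
  forall rho, R rho ->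
    incl (vars (rhs rho))
         (vars (lhs rho) ++ flat_map (fun c => vars (fst c) ++ vars (snd c)) (conds rho)).

Section U.
Variables (F : Type) (arity : F -> nat) (R : crule F -> Prop).

(** Symbols of U(F): old symbols, and U^alpha_i represented as (alpha, i). *)
Definition Usym : Type := (F + (crule F * nat))%type.

(** i-th condition (1-based). *)
Definition cond_s (a : crule F) (i : nat) : term F := fst (nth (i - 1) (conds a) (Var 0, Var 0)).
Definition cond_t (a : crule F) (i : nat) : term F := snd (nth (i - 1) (conds a) (Var 0, Var 0)).

Definition xs (a : crule F) (i : nat) : list nat :=
  nodup Nat.eq_dec (vars (lhs a) ++ vars_ts (firstn (i - 1) (conds a))).

Definition U_ok : Usym -> nat -> Prop := fun f n =>
  match f with
  | inl g => arity g = n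
  | inr (a, i) => R a /\ 1 <= i <= length (conds a) /\ n = S (length (xs a i))
  end.

Definition lift (t : term F) : term Usym := map_term (@inl F (crule F * nat)) t.

Definition Uterm (a : crule F) (i : nat) (u : term F) : term Usym :=
  Fun (inr (a, i)) (lift u :: map Var (xs a i)).

Inductive U_rules : crule Usym -> Prop :=
| U_uncond : forall a, R a -> conds a = [] -> U_rules (mkRule (lift (lhs a)) (lift (rhs a)) [])
| U_first : forall a, R a -> 1 <= length (conds a) ->
    U_rules (mkRule (lift (lhs a)) (Uterm a 1 (cond_s a 1)) [])
| U_mid : forall a i, R a -> 2 <= i <= length (conds a) ->
    U_rules (mkRule (Uterm a (i - 1) (cond_t a (i - 1))) (Uterm a i (cond_s a i)) [])
| U_last : forall a, R a -> 1 <= length (conds a) ->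
    U_rules (mkRule (Uterm a (length (conds a)) (cond_t a (length (conds a)))) (lift (rhs a)) []).

Definition U_preserves_irreducibility : Prop :=
  forall t, wf (ok_of arity) t -> (forall u, ~ step (ok_of arity) R t u) ->
  forall u, ~ step U_ok U_rules (lift t) u.
End U.

(* Main.v *)
Require Import Defs.
From Stdlib Require Import List Arith PeanoNat Lia Classical ClassicalEpsilon.
Import ListNotations.

Section Proof.
Variables (F : Type) (arity : F -> nat) (R : crule F -> Prop).

Fixpoint term_ind' {Sg : Type} (P : term Sg -> Prop) (Hv : forall x, P (Var x))
  (Hf : forall f ts, Forall P ts -> P (Fun f ts)) (t : term Sg) : P t :=
  match t with
  | Var x => Hv x
  | Fun f ts => Hf f ts ((fix go (l : list (term Sg)) : Forall P l :=
       match l with [] => Forall_nil _ | u :: l' => Forall_cons u (term_ind' P Hv Hf u) (go l') end) ts)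
  end.

Local Notation ok := (ok_of arity).
Local Notation UU := (step (U_ok arity R) (U_rules R)).

Lemma rtc_trans {A} (r : A -> A -> Prop) x y z : rtc r x y -> rtc r y z -> rtc r x z.
Proof. induction 1; intros; auto. econstructor; eauto. Qed.

Lemma rtc1 {A} (r : A -> A -> Prop) x y : r x y -> rtc r x y.
Proof. intros; econstructor; eauto; constructor. Qed.

Lemma lift_inj : forall t u : term F, lift t = lift u -> t = u.
Proof.
  intro t; induction t using term_ind'; intros u Hl.
  - destruct u; simpl in Hl; inversion Hl; auto.
  - destruct u as [y|g us]; simpl in Hl; inversion Hl as [[Hf Hts]]. subst.
    f_equal. clear Hl. revert us Hts. induction H as [|a l Ha Hl IH]; intros us Hm.
    + destruct us; simpl in Hm; inversion Hm; auto.
    + destruct us as [|b us]; simpl in Hm; inversion Hm. f_equal; auto.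
Qed.

Lemma lift_subst : forall sigma (t : term F),
  lift (subst sigma t) = subst (fun x => lift (sigma x)) (lift t).
Proof.
  intros sigma t; induction t using term_ind'; simpl; auto.
  unfold lift in *; simpl; f_equal. rewrite !map_map. induction H; simpl; auto. f_equal; auto.
Qed.

Lemma wf_subst {Sg} (o : Sg -> nat -> Prop) sigma t :
  wf o t -> (forall x, wf o (sigma x)) -> wf o (subst sigma t).
Proof.
  induction 1; intros Hs; simpl; auto. constructor.
  - rewrite length_map; auto.
  - intros u Hu. apply in_map_iff in Hu. destruct Hu as [v [<- Hv]]. auto.
Qed.

Lemma wf_lift t : wf ok t -> wf (U_ok arity R) (lift t).
Proof.
  induction 1; unfold lift in *; simpl; constructor; simpl.
  - rewrite length_map; simpl; auto.
  - intros u Hu. apply in_map_iff in Hu. destruct Hu as [v [<- Hv]]. auto.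
Qed.

Lemma step_wf (Hc : is_CTRS arity R) s t : step ok R s t -> wf ok s -> wf ok t.
Proof.
  induction 1; intros Hs.
  - apply wf_subst; auto. apply (Hc _ H).
  - inversion Hs as [|f0 ts0 Hok Hall]; subst. constructor.
    + rewrite length_app in *; simpl in *; auto.
    + intros u Hu. apply in_app_or in Hu. destruct Hu as [Hu|[<-|Hu]];
      [apply Hall; apply in_or_app; auto | apply IHstep; apply Hall; apply in_or_app; simpl; auto
      | apply Hall; apply in_or_app; simpl; auto].
Qed.

Lemma rtc_wf (Hc : is_CTRS arity R) s t : rtc (step ok R) s t -> wf ok s -> wf ok t.
Proof. induction 1; auto. intros; apply IHrtc; eapply step_wf; eauto. Qed.

Lemma ctx_U f l1 l2 a b : rtc UU a b -> rtc UU (Fun f (l1 ++ a :: l2)) (Fun f (l1 ++ b :: l2)).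
Proof. induction 1. constructor. econstructor. apply step_ctx; eauto. auto. Qed.

Lemma ctx_lift f l1 l2 a b : rtc UU (lift a) (lift b) ->
  rtc UU (lift (Fun f (l1 ++ a :: l2))) (lift (Fun f (l1 ++ b :: l2))).
Proof. intros H. unfold lift in *. simpl. rewrite !map_app. simpl. apply ctx_U; auto. Qed.

Lemma U_root L Rr sigma : U_rules R (mkRule L Rr []) -> (forall x, wf (U_ok arity R) (sigma x)) ->
  UU (subst sigma L) (subst sigma Rr).
Proof.
  intros H Hw.
  exact (@step_root _ _ _ (mkRule L Rr []) sigma H Hw
     (fun c (Hin : In c (conds (mkRule L Rr []))) => False_ind _ Hin)).
Qed.

Lemma chain rho sigma : R rho -> (forall x, wf ok (sigma x)) ->
  (forall c, In c (conds rho) -> rtc UU (lift (subst sigma (fst c))) (lift (subst sigma (snd c)))) ->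
  rtc UU (lift (subst sigma (lhs rho))) (lift (subst sigma (rhs rho))).
Proof.
  intros HR Hw Hc.
  set (s' := fun x => lift (sigma x)).
  assert (Hw' : forall x, wf (U_ok arity R) (s' x)) by (intro; apply wf_lift; auto).
  rewrite !lift_subst. fold s'.
  destruct (conds rho) as [|c0 cs] eqn:Ec.
  - apply rtc1. apply U_root; auto. apply U_uncond; auto.
  - set (n := length (conds rho)).
    assert (Hn : 1 <= n) by (unfold n; rewrite Ec; simpl; lia).
    assert (Hcs : forall i, 1 <= i <= n -> rtc UU (subst s' (Uterm rho i (cond_s rho i)))
                                          (subst s' (Uterm rho i (cond_t rho i)))).
    { intros i Hi. unfold Uterm. simpl.
      apply (ctx_U _ [] _ ). unfold cond_s, cond_t. unfold s'. rewrite <- !lift_subst.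
      apply Hc. rewrite <- Ec. apply nth_In. unfold n in Hi. lia. }
    assert (HP : forall k, 1 <= k <= n -> rtc UU (subst s' (lift (lhs rho)))
                                           (subst s' (Uterm rho k (cond_t rho k)))).
    { induction k as [|k IH]; intros Hk; [lia|].
      destruct k as [|k].
      - eapply rtc_step. apply U_root; auto. apply U_first; auto.
        apply Hcs; lia.
      - eapply rtc_trans. apply IH; lia.
        eapply rtc_step.
        + apply (U_root (Uterm rho (S (S k) - 1) (cond_t rho (S (S k) - 1)))); auto.
          apply U_mid; auto. unfold n in Hk. lia.
        + apply Hcs; lia. }
    eapply rtc_trans. apply (HP n); lia.
    apply rtc1. apply U_root; auto. apply U_last; auto; lia.
Qed.

Fixpoint sim s t (H : step ok R s t) {struct H} : rtc UU (lift s) (lift t) :=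
  match H in step _ _ s t return rtc UU (lift s) (lift t) with
  | @step_root _ _ _ rho sigma HR Hw Hc => chain rho sigma HR Hw (fun c Hin =>
        (fix simr a b (H' : rtc (step ok R) a b) : rtc UU (lift a) (lift b) :=
           match H' in rtc _ a b return rtc UU (lift a) (lift b) with
           | @rtc_refl _ _ x => @rtc_refl _ _ _
           | @rtc_step _ _ x y z Hxy Hyz => @rtc_trans _ _ _ _ _ (sim x y Hxy) (simr y z Hyz)
           end) _ _ (Hc c Hin))
  | @step_ctx _ _ _ f l1 s0 t0 l2 H0 => @ctx_lift f l1 l2 s0 t0 (sim s0 t0 H0)
  end.

Lemma sim_rtc s t : rtc (step ok R) s t -> rtc UU (lift s) (lift t).
Proof. induction 1. constructor. eapply rtc_trans; eauto. apply sim; auto. Qed.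

Lemma nf_exists (Hc : is_CTRS arity R) (Hterm : terminating ok R) t : wf ok t ->
  exists n, rtc (step ok R) t n /\ wf ok n /\ forall u, ~ step ok R n u.
Proof.
  intros Ht. apply NNPP; intro Hno.
  set (P := fun x => wf ok x /\ ~ exists n, rtc (step ok R) x n /\ wf ok n /\ forall u, ~ step ok R n u).
  assert (Hnext : forall x, P x -> exists y, step ok R x y /\ P y).
  { intros x [Hx Hnx]. apply NNPP; intro Hc'. apply Hnx. exists x.
    split; [constructor|split; auto]. intros y Hxy. apply Hc'. exists y. split; auto.
    split. eapply step_wf; eauto.
    intros [n [Hyn [Hn Hirr]]]. apply Hnx. exists n. split; [econstructor; eauto|auto]. }
  pose (next := fun p : {x | P x} =>
     let (y, Hy) := constructive_indefinite_description _ (Hnext _ (proj2_sig p)) in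
     exist P y (proj2 Hy)).
  assert (Hstep : forall p, step ok R (proj1_sig p) (proj1_sig (next p))).
  { intros p. unfold next. destruct (constructive_indefinite_description _ _) as [y [Hy1 Hy2]].
    simpl. exact Hy1. }
  assert (HPt : P t) by (split; auto).
  apply Hterm. exists (fun n => proj1_sig (Nat.iter n next (exist P t HPt))).
  split; [exact Ht|]. intros n. simpl. apply Hstep.
Qed.

Lemma irr_rtc u v : (forall w, ~ UU u w) -> rtc UU u v -> u = v.
Proof. intros H Hr. destruct Hr; auto. exfalso; eapply H; eauto. Qed.

End Proof.

Theorem theorem29 (F : Type) (arity : F -> nat) (R : crule F -> Prop) :
  is_CTRS arity R -> deterministic R -> type3 R ->
  terminating (ok_of arity) R ->
  U_preserves_irreducibility arity R ->
  confluent (U_ok arity R) (U_rules R) ->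
  confluent (ok_of arity) R.
Proof.
  intros Hc _ _ Hterm Hpres HU s t u Hs Hst Hsu.
  assert (Wt : wf (ok_of arity) t) by (eapply rtc_wf; eauto).
  assert (Wu : wf (ok_of arity) u) by (eapply rtc_wf; eauto).
  destruct (@nf_exists F arity R Hc Hterm t Wt) as [t' [Ht' [Wt' It']]].
  destruct (@nf_exists F arity R Hc Hterm u Wu) as [u' [Hu' [Wu' Iu']]].
  assert (A1 : wf (U_ok arity R) (lift s)) by (apply (@wf_lift F arity R); auto).
  assert (A2 : rtc (step (U_ok arity R) (U_rules R)) (lift s) (lift t'))
    by (apply sim_rtc; apply (@rtc_trans _ _ _ _ _ Hst Ht')).
  assert (A3 : rtc (step (U_ok arity R) (U_rules R)) (lift s) (lift u'))
    by (apply sim_rtc; apply (@rtc_trans _ _ _ _ _ Hsu Hu')).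
  destruct (HU _ _ _ A1 A2 A3) as [v [Hv1 Hv2]].
  apply irr_rtc in Hv1; [|apply Hpres; auto].
  apply irr_rtc in Hv2; [|apply Hpres; auto].
  subst. apply lift_inj in Hv2. subst. eexists; split; eassumption.
Qed.
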